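(* Let $q_1,q_2$ be integers with $1\le q_1\le q_2$, $A=\begin{pmatrix}3q_1&0\\0&3q_2\end{pmatrix}$, $\mathcal{D}=\left\{\begin{pmatrix}0\\0\end{pmatrix},\begin{pmatrix}1\\0\end{pmatrix},\begin{pmatrix}0\\1\end{pmatrix}\right\}$, and $\mu_{A,\mathcal{D}}$ the associated Sierpiński-type measure. If $\Lambda$ is an orthogonal set of $\mu_{A,\mathcal{D}}$, then $\Lambda$ has at most one point on every horizontal line and at most one point on every vertical line; i.e., any two distinct points of $\Lambda$ differ in both coordinates.
   Context: $\mu_{A,\mathcal{D}}$ is the unique Borel probability measure on $\mathbb{R}^2$ with $\mu_{A,\mathcal{D}}(E)=\frac13\sum_{d\in\mathcal{D}}\mu_{A,\mathcal{D}}(AE-d)$ for Borel $E$. A countable $\Lambda\subseteq\mathbb{R}^2$ is an orthogonal set of $\mu$ if $\{e^{-2\pi i\langle\lambda,x\rangle}:\lambda\in\Lambda\}$ is orthogonal in $L^2(\mu)$. *)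

(* Defs.v *)
From HB Require Import structures.
From mathcomp Require Import all_boot all_order all_algebra.
From mathcomp Require Import all_classical all_reals all_analysis.
Set Implicit Arguments. Unset Strict Implicit. Unset Printing Implicit Defensive.
Import Order.TTheory GRing.Theory Num.Theory.
Local Open Scope classical_set_scope.
Local Open Scope ring_scope.

Definition sier_digits (R : realType) : seq (R * R) :=
  [:: (0, 0); (1, 0); (0, 1)].

Definition sier_map (R : realType) (q1 q2 : nat) (d : R * R) (x : R * R) : R * R :=
  ((3 * q1%:R) * x.1 - d.1, (3 * q2%:R) * x.2 - d.2).

(* mu is the Sierpinski-type self-affine measure mu_{A,D}: a Borel probability
   measure on R^2 with mu(E) = 1/3 sum_{d in D} mu(A E - d) for all Borel E.
   (Such a measure is unique.) *)
Definition is_sierpinski_measure (R : realType) (q1 q2 : nat)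
    (mu : probability (R * R)%type R) : Prop :=
  forall E : set (R * R), measurable E ->
    (mu E = ((3%:R : R)^-1)%:E * \sum_(d <- sier_digits R) mu (sier_map q1 q2 d @` E))%E.

Definition dotR2 (R : realType) (u v : R * R) : R := u.1 * v.1 + u.2 * v.2.

(* <e_l, e_l'>_{L^2(mu)} = \int e^{-2 pi i <l - l', x>} dmu(x); it vanishes
   iff both its real part and imaginary part vanish. *)
Definition exp_orthogonal (R : realType) (mu : probability (R * R)%type R)
    (l l' : R * R) : Prop :=
  (\int[mu]_x (cos (2 * pi * dotR2 (l - l') x))%:E = 0)%E /\
  (\int[mu]_x (sin (2 * pi * dotR2 (l - l') x))%:E = 0)%E.

Definition orthogonal_set (R : realType) (mu : probability (R * R)%type R)
    (Lam : set (R * R)) : Prop :=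
  countable Lam /\
  forall l l', Lam l -> Lam l' -> l <> l' -> exp_orthogonal mu l l'.

(* Main.v *)
Require Import Defs.
From HB Require Import structures.
From mathcomp Require Import all_boot all_order all_algebra.
From mathcomp Require Import all_classical all_reals all_analysis.
From mathcomp Require Import measurable_realfun.
From mathcomp Require Import ring lra.
Import Order.TTheory GRing.Theory Num.Theory.
Import numFieldNormedType.Exports.
Local Open Scope classical_set_scope.
Local Open Scope ring_scope.


Definition RI (R : realType) (mu : probability (R*R)%type R) (h : R * R -> R) : R :=
  fine (\int[mu]_x (h x)%:E)%E.
Arguments RI {R}.

Section RIsec.
Context {R : realType} {mu : probability (R*R)%type R}.


Lemma int_bnd (h : R * R -> R) M : measurable_fun setT h -> (forall x, `|h x| <= M) ->
  mu.-integrable setT (EFin \o h).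
Proof.
move=> mh hM.
apply: (le_integrable (g := EFin \o cst M) measurableT); last exact: finite_measure_integrable_cst.
- exact/measurable_EFinP.
- move=> x _ /=; rewrite lee_fin.
  exact: le_trans (hM x) (ler_norm M).
Qed.

Lemma RIE (h : R * R -> R) M : measurable_fun setT h -> (forall x, `|h x| <= M) ->
  (\int[mu]_x (h x)%:E = (RI mu h)%:E)%E.
Proof.
move=> mh hM; rewrite /RI fineK //.
apply: integrable_fin_num => //; have := int_bnd _ _ mh hM; exact.
Qed.

Lemma RI_lin (a b : R) (h1 h2 : R * R -> R) M1 M2 :
  measurable_fun setT h1 -> (forall x, `|h1 x| <= M1) ->
  measurable_fun setT h2 -> (forall x, `|h2 x| <= M2) ->
  RI mu (fun x => a * h1 x + b * h2 x) = a * RI mu h1 + b * RI mu h2.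
Proof.
move=> m1 b1 m2 b2.
rewrite {1}/RI.
have -> : (\int[mu]_x (a * h1 x + b * h2 x)%:E = (a * RI mu h1 + b * RI mu h2)%:E)%E.
  under eq_integral => x _ do rewrite EFinD !EFinM.
  rewrite integralD //; last 2 first.
  - exact: integrableZl (int_bnd _ _ m1 b1).
  - exact: integrableZl (int_bnd _ _ m2 b2).
  rewrite integralZl //; last exact: (int_bnd _ _ m1 b1).
  rewrite integralZl //; last exact: (int_bnd _ _ m2 b2).
  by rewrite (RIE _ _ m1 b1) (RIE _ _ m2 b2).
by [].
Qed.

Lemma int_addc (h : R * R -> R) M c : measurable_fun setT h -> (forall x, `|h x| <= M) ->
  (\int[mu]_x (h x + c)%:E = (RI mu h + c)%:E)%E.
Proof.
move=> mh hM.
under eq_integral => x _ do rewrite EFinD.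
rewrite integralD //; last 2 first.
- exact: (int_bnd _ _ mh hM).
- exact: finite_measure_integrable_cst.
rewrite (RIE _ _ mh hM).
have := integral_cst mu measurableT c%:E.
move=> ->.
apply: (etrans (y := ((RI mu h)%:E + c%:E * 1)%E)).
  by congr (_ + (_ * _))%E; exact: probability_setT.
by rewrite mule1.
Qed.

End RIsec.

Section Sier.
Context (R : realType) (q1 q2 : nat) (mu : probability (R*R)%type R).
Hypotheses (q1p : (0 < q1)%N) (q2p : (0 < q2)%N).
Hypothesis Hmu : is_sierpinski_measure q1 q2 mu.

Definition phi (d : R * R) (x : R * R) : R * R :=
  ((x.1 + d.1) / (3 * q1%:R), (x.2 + d.2) / (3 * q2%:R)).

Lemma a0 : (3 * q1%:R : R) != 0.
Proof. by rewrite mulf_neq0 // pnatr_eq0 -lt0n. Qed.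
Lemma b0 : (3 * q2%:R : R) != 0.
Proof. by rewrite mulf_neq0 // pnatr_eq0 -lt0n. Qed.

Lemma sier_phi d E : sier_map q1 q2 d @` E = phi d @^-1` E.
Proof.
apply/seteqP; split => y /=.
- case=> x Ex <-; rewrite /phi /sier_map /=.
  rewrite !subrK [_ * x.1]mulrC [_ * x.2]mulrC !mulfK ?a0 ?b0 //.
  by case: x Ex.
- move=> Ey; exists (phi d y) => //; rewrite /sier_map /phi /=.
  rewrite [_ * ((y.1 + _) / _)]mulrC [_ * ((y.2 + _) / _)]mulrC.
  rewrite !divfK ?a0 ?b0 // !addrK.
  by case: y Ey.
Qed.

Lemma mphi d : measurable_fun setT (phi d).
Proof.
have m1 (c k : R) : measurable_fun setT (fun y : R => (y + c) / k).
  by apply: measurable_funM => //; apply: measurable_funD.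
rewrite /phi; apply: measurable_fun_pair.
- exact: (measurableT_comp (m1 _ _) measurable_fst).
- exact: (measurableT_comp (m1 _ _) measurable_snd).
Qed.

Lemma int_self (f : R * R -> \bar R) : measurable_fun setT f -> (forall x, 0 <= f x)%E ->
  (\int[mu]_x f x = (3^-1)%:E * (\int[mu]_x f (phi (0%R,0%R) x) +
      (\int[mu]_x f (phi (1%R,0%R) x) + \int[mu]_x f (phi (0%R,1%R) x))))%E.
Proof.
move=> mf f0.
pose p0 := measure_function_pushforward__canonical__measure_function_Measure mu (mphi (0%R,0%R)).
pose p1 := measure_function_pushforward__canonical__measure_function_Measure mu (mphi (1%R,0%R)).
pose p2 := measure_function_pushforward__canonical__measure_function_Measure mu (mphi (0%R,1%R)).
have k3 : (0 <= (3^-1 : R))%R by rewrite invr_ge0.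
pose nu := mscale (NngNum (x := (3^-1 : R)) k3) (measure_add p0 (measure_add p1 p2)).
transitivity (\int[nu]_x f x)%E.
  apply: eq_measure_integral => A mA _.
  apply: (etrans _ (esym (congr1 (fun z => (3^-1)%:E * z)%E
    (etrans (measure_addE p0 _ A) (congr1 (fun z => p0 A + z)%E (measure_addE p1 p2 A)))))).
  apply: etrans (Hmu A mA) _.
  rewrite /sier_digits !big_cons big_nil adde0 !sier_phi.
  by [].
rewrite ge0_integral_mscale //.
rewrite ge0_integral_measure_add //.
rewrite ge0_integral_measure_add //.
rewrite /p0 /p1 /p2 !ge0_integral_pushforward //.
all: try exact: mphi.
all: try by move=> *; apply: f0.
Qed.

Lemma RI_self (h : R * R -> R) M : measurable_fun setT h -> (forall x, `|h x| <= M) ->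
  RI mu h = 3^-1 * (RI mu (h \o phi (0,0)) + (RI mu (h \o phi (1,0)) + RI mu (h \o phi (0,1)))).
Proof.
move=> mh hM.
have hp d : measurable_fun setT (h \o phi d) := measurableT_comp mh (mphi d).
have hpM d x : `|(h \o phi d) x| <= M := hM _.
have f0 : forall x, (0 <= (fun x => (h x + M)%:E) x)%E.
  move=> x /=; rewrite lee_fin; have := hM x; rewrite ler_norml => /andP[h1 _]; lra.
have mf : measurable_fun setT (fun x => (h x + M)%:E).
  by apply/measurable_EFinP; exact: measurable_funD mh (measurable_cst _).
have := int_self _ mf f0.
rewrite (int_addc _ _ _ mh hM) /=.
rewrite -[fun x => (h (phi (0,0) x) + M)%:E]/(fun x => ((h \o phi (0,0)) x + M)%:E).
rewrite -[fun x => (h (phi (1,0) x) + M)%:E]/(fun x => ((h \o phi (1,0)) x + M)%:E).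
rewrite -[fun x => (h (phi (0,1) x) + M)%:E]/(fun x => ((h \o phi (0,1)) x + M)%:E).
rewrite !(int_addc _ _ _ (hp _) (hpM _)).
rewrite -!EFinD -EFinM; case=> E.
lra.
Qed.

Lemma rec_snd (g : R -> R) : measurable_fun setT g -> (forall y, `|g y| <= 1) ->
  RI mu (g \o snd) = 3^-1 * (2 * RI mu (fun x => g (x.2 / (3 * q2%:R))) +
                             RI mu (fun x => g ((x.2 + 1) / (3 * q2%:R)))).
Proof.
move=> mg gb.
rewrite (RI_self _ 1 (measurableT_comp mg measurable_snd)); last by move=> x; exact: gb.
have -> : (g \o snd) \o phi (0,0) = (fun x => g (x.2 / (3 * q2%:R))).
  by apply: funext => x; rewrite /comp /phi /= addr0.
have -> : (g \o snd) \o phi (1,0) = (fun x => g (x.2 / (3 * q2%:R))).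
  by apply: funext => x; rewrite /comp /phi /= addr0.
have -> : (g \o snd) \o phi (0,1) = (fun x => g ((x.2 + 1) / (3 * q2%:R))).
  by apply: funext => x; rewrite /comp /phi /=.
lra.
Qed.

Lemma rec_fst (g : R -> R) : measurable_fun setT g -> (forall y, `|g y| <= 1) ->
  RI mu (g \o fst) = 3^-1 * (2 * RI mu (fun x => g (x.1 / (3 * q1%:R))) +
                             RI mu (fun x => g ((x.1 + 1) / (3 * q1%:R)))).
Proof.
move=> mg gb.
rewrite (RI_self _ 1 (measurableT_comp mg measurable_fst)); last by move=> x; exact: gb.
have -> : (g \o fst) \o phi (0,0) = (fun x => g (x.1 / (3 * q1%:R))).
  by apply: funext => x; rewrite /comp /phi /= addr0.
have -> : (g \o fst) \o phi (0,1) = (fun x => g (x.1 / (3 * q1%:R))).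
  by apply: funext => x; rewrite /comp /phi /= addr0.
have -> : (g \o fst) \o phi (1,0) = (fun x => g ((x.1 + 1) / (3 * q1%:R))).
  by apply: funext => x; rewrite /comp /phi /=.
lra.
Qed.
End Sier.

Section Core.
Context (R : realType) (mu : probability (R*R)%type R) (p : R * R -> R).
Hypothesis mp : measurable_fun setT p.
Context (b : R).
Hypothesis b1 : 1 < b.
Hypothesis Hrec : forall g : R -> R, measurable_fun setT g -> (forall y, `|g y| <= 1) ->
  RI mu (g \o p) = 3^-1 * (2 * RI mu (fun x => g (p x / b)) + RI mu (fun x => g ((p x + 1) / b))).

Lemma mlin (k : R) : measurable_fun setT (fun x => k * p x).
Proof. exact: measurable_funM (measurable_cst _) mp. Qed.

Lemma mcos (k : R) : measurable_fun setT (fun x => cos (k * p x)).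
Proof. exact: measurableT_comp (continuous_measurable_fun (@continuous_cos R)) (mlin k). Qed.

Lemma msin (k : R) : measurable_fun setT (fun x => sin (k * p x)).
Proof. exact: measurableT_comp (continuous_measurable_fun (@continuous_sin R)) (mlin k). Qed.

Let Ck k := RI mu (fun x => cos (k * p x)).
Let Sk k := RI mu (fun x => sin (k * p x)).

Lemma step k : Ck k = 0 -> Sk k = 0 -> Ck (k / b) = 0 /\ Sk (k / b) = 0.
Proof.
have b0 : b != 0 by rewrite gt_eqF // (lt_trans ltr01 b1).
move=> c0 s0.
have mc : measurable_fun setT (fun y => cos (k * y)).
  apply: (measurableT_comp (f := cos) (g := fun y : R => k * y)).
    exact: continuous_measurable_fun (@continuous_cos R).
  by apply: measurable_funM => //; exact: measurable_cst.
have ms : measurable_fun setT (fun y => sin (k * y)).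
  apply: (measurableT_comp (f := sin) (g := fun y : R => k * y)).
    exact: continuous_measurable_fun (@continuous_sin R).
  by apply: measurable_funM => //; exact: measurable_cst.
have Hc := Hrec _ mc (fun y => cos_max _).
have Hs := Hrec _ ms (fun y => sin_max _).
set a := k / b in Hc Hs *.
have e1 : (fun x => cos (k * (p x / b))) = (fun x => cos (a * p x)).
  by apply: funext => x; congr cos; rewrite /a; ring.
have e2 : (fun x => cos (k * ((p x + 1) / b))) =
          (fun x => cos a * cos (a * p x) + (- sin a) * sin (a * p x)).
  apply: funext => x.
  have -> : k * ((p x + 1) / b) = a * p x + a by rewrite /a; ring.
  by rewrite cosD; ring.
have e3 : (fun x => sin (k * (p x / b))) = (fun x => sin (a * p x)).
  by apply: funext => x; congr sin; rewrite /a; ring.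
have e4 : (fun x => sin (k * ((p x + 1) / b))) =
          (fun x => sin a * cos (a * p x) + cos a * sin (a * p x)).
  apply: funext => x.
  have -> : k * ((p x + 1) / b) = a * p x + a by rewrite /a; ring.
  by rewrite sinD; ring.
rewrite e1 e2 (RI_lin _ _ _ _ _ _ (mcos a) (fun x => cos_max _) (msin a) (fun x => sin_max _)) in Hc.
rewrite e3 e4 (RI_lin _ _ _ _ _ _ (mcos a) (fun x => cos_max _) (msin a) (fun x => sin_max _)) in Hs.
have Hc' : Ck k = 3^-1 * (2 * Ck a + (cos a * Ck a + - sin a * Sk a)) by exact: Hc.
have Hs' : Sk k = 3^-1 * (2 * Sk a + (sin a * Ck a + cos a * Sk a)) by exact: Hs.
rewrite c0 in Hc'; rewrite s0 in Hs'.
have ca := cos_geN1 a.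
set C := Ck a in Hc' Hs' *; set S := Sk a in Hc' Hs' *.
set c := cos a in Hc' Hs' ca; set s := sin a in Hc' Hs'.
have E1 : (2 + c) * C - s * S = 0 by lra.
have E2 : s * C + (2 + c) * S = 0 by lra.
have pos : 0 < (2 + c) ^+ 2 + s ^+ 2 by nra.
have EC : ((2 + c) ^+ 2 + s ^+ 2) * C = 0.
  have -> : ((2 + c) ^+ 2 + s ^+ 2) * C = (2 + c) * ((2 + c) * C - s * S) + s * (s * C + (2 + c) * S) by ring.
  by rewrite E1 E2 !mulr0 addr0.
have ES : ((2 + c) ^+ 2 + s ^+ 2) * S = 0.
  have -> : ((2 + c) ^+ 2 + s ^+ 2) * S = (2 + c) * (s * C + (2 + c) * S) - s * ((2 + c) * C - s * S) by ring.
  by rewrite E1 E2 !mulr0 subr0.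
move/eqP: EC; rewrite mulf_eq0 (gt_eqF pos) /= => /eqP ->.
move/eqP: ES; rewrite mulf_eq0 (gt_eqF pos) /= => /eqP ->.
by [].
Qed.


Lemma core k : ~ ((\int[mu]_x (cos (k * p x))%:E = 0)%E /\ (\int[mu]_x (sin (k * p x))%:E = 0)%E).
Proof.
move=> [c0 s0].
have Z : forall n, Ck (k * b^-1 ^+ n) = 0 /\ Sk (k * b^-1 ^+ n) = 0.
  elim=> [|n [IH1 IH2]].
    by rewrite expr0 mulr1 /Ck /Sk /RI c0 s0.
  by rewrite exprSr mulrA; exact: step.
have b0 : 0 < b := lt_trans ltr01 b1.
have qlt : `|b^-1| < 1.
  rewrite ger0_norm; last by rewrite invr_ge0 ltW.
  by rewrite invf_lt1.
have conv : (fun n => \int[mu]_x (cos (k * b^-1 ^+ n * p x))%:E)%E @ \oo --> (\int[mu]_x (1%:E : \bar R))%E.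
  apply: (@dominated_cvg _ _ _ mu setT measurableT (fun n x => (cos (k * b^-1 ^+ n * p x))%:E) (fun x => 1%:E) (fun x => 1%:E)).
  - move=> n; apply/measurable_EFinP; exact: mcos.
  - move=> x _; apply: cvg_EFin; first exact: nearW.
    have h1 : cos (k * b^-1 ^+ n * p x) @[n --> \oo] --> cos (0:R).
      apply: (cvg_comp (fun n => k * b^-1 ^+ n * p x) cos); last exact: continuous_cos.
      have -> : (0:R) = k * 0 * p x by rewrite mulr0 mul0r.
      apply: cvgMr_tmp; apply: cvgMl_tmp; exact: cvg_expr.
    rewrite cos0 in h1; exact: h1.
  - by [].
  - exact: finite_measure_integrable_cst.
  - by move=> n x _; rewrite /= lee_fin; exact: cos_max.
have I1 : (\int[mu]_x (1%:E : \bar R) = 1)%E.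
  have := integral_cst mu measurableT 1%:E.
  rewrite mul1e => ->; exact: probability_setT.
have Z0 : (fun n => \int[mu]_x (cos (k * b^-1 ^+ n * p x))%:E)%E = fun=> 0%E.
  apply: funext => n; rewrite (RIE _ _ (mcos _) (fun x => cos_max _)).
  by move: (Z n) => [+ _]; rewrite /Ck => ->.
rewrite Z0 I1 in conv.
have := cvg_lim (@ereal_hausdorff R) conv.
rewrite lim_cst; last exact: ereal_hausdorff.
move=> /(_ eventually_filter).
by case=> /esym/eqP; rewrite oner_eq0.
Qed.

End Core.

Theorem proposition4p1 (R : realType) (q1 q2 : nat)
    (mu : probability (R * R)%type R) (Lam : set (R * R)) :
  (1 <= q1)%N -> (q1 <= q2)%N ->
  is_sierpinski_measure q1 q2 mu ->
  orthogonal_set mu Lam ->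
  forall l l', Lam l -> Lam l' -> l <> l' -> l.1 <> l'.1 /\ l.2 <> l'.2.
Proof.
move=> q1p q12 Hmu [_ Horth] l l' Ll Ll' nll.
have q2p : (0 < q2)%N := leq_trans q1p q12.
have [c0 s0] := Horth l l' Ll Ll' nll.
have b1 : forall q : nat, (0 < q)%N -> (1 : R) < 3 * q%:R.
  move=> q qp; have : (1 : R) <= q%:R by rewrite ler1n.
  lra.
split => E.
- apply: (core _ _ _ measurable_snd _ (b1 q2 q2p) (rec_snd _ _ _ _ q1p q2p Hmu) (2 * pi * (l.2 - l'.2))).
  split; [rewrite -c0 | rewrite -s0]; apply: eq_integral => x _;
    by rewrite /dotR2 /= E subrr mul0r add0r mulrA.
- apply: (core _ _ _ measurable_fst _ (b1 q1 q1p) (rec_fst _ _ _ _ q1p q2p Hmu) (2 * pi * (l.1 - l'.1))).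
  split; [rewrite -c0 | rewrite -s0]; apply: eq_integral => x _;
    by rewrite /dotR2 /= E subrr mul0r addr0 mulrA.
Qed.
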